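(* Let $(\mathcal{A},v)$ be a valued abelian group and $A_1,\dots,A_n$ subgroups of $\mathcal{A}$ such that each $(A_i,v)$ is spherically complete. If the sum $A_1+\dots+A_n$ is pseudo-direct, then $(A_1+\dots+A_n,v)$ is spherically complete and has the optimal approximation property in $\mathcal{A}$: for every $z\in\mathcal{A}$ there is $y_0\in A_1+\dots+A_n$ with $v(z-y_0)=\max\{v(z-y)\mid y\in A_1+\dots+A_n\}$.
   Context: A valued abelian group $(G,v)$ is an abelian group with a map $v$ onto $vG\cup\{\infty\}$ ($vG$ totally ordered, $\infty$ maximal) with $va=\infty$ iff $a=0$ and $v(a-b)\ge\min\{va,vb\}$; subgroups carry the restricted $v$. It is spherically complete if in the ultrametric space $u(a,b)=v(a-b)$ every nest (family totally ordered by inclusion) of balls has non-empty intersection, balls being unions of non-empty collections of closed balls $\{x:v(x-c)\ge\alpha\}$ with a common element. The sum $A_1+\dots+A_n$ is pseudo-direct if for every nonzero $a'\in A_1+\dots+A_n$ there are $a_i\in A_i$ with $v\sum_{i=1}^na_i=\min_iva_i$ and $v(a'-\sum_{i=1}^na_i)>va'$. *)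

(* Defs.v *)
From HB Require Import structures.
From mathcomp Require Import all_boot all_order all_algebra.
Set Implicit Arguments. Unset Strict Implicit. Unset Printing Implicit Defensive.
Import Order.TTheory GRing.Theory.

Local Open Scope ring_scope.

Definition is_valuation (G : zmodType) (d : Order.disp_t) (Gam : orderType d)
    (oo : Gam) (v : G -> Gam) : Prop :=
  [/\ (forall g : Gam, (g <= oo)%O),
      (forall a : G, v a = oo <-> a = 0) &
      (forall a b : G, (Order.min (v a) (v b) <= v (a - b))%O)].

Definition is_subgroup (G : zmodType) (A : G -> Prop) : Prop :=
  A 0 /\ (forall x y, A x -> A y -> A (x - y)).

Section Balls.
Variables (G : zmodType) (d : Order.disp_t) (Gam : orderType d).

Definition cball (A : G -> Prop) (v : G -> Gam) (c : G) (al : Gam) : G -> Prop :=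
  fun x => A x /\ (al <= v (x - c))%O.

Definition is_ball (A : G -> Prop) (v : G -> Gam) (B : G -> Prop) : Prop :=
  exists S : G * Gam -> Prop,
    [/\ (exists p, S p),
        (forall p, S p -> A p.1),
        (exists z, forall p, S p -> cball A v p.1 p.2 z) &
        (forall x, B x <-> exists p, S p /\ cball A v p.1 p.2 x)].

Definition is_nest (A : G -> Prop) (v : G -> Gam) (N : (G -> Prop) -> Prop) : Prop :=
  (forall B, N B -> is_ball A v B) /\
  (forall B1 B2, N B1 -> N B2 ->
     (forall x, B1 x -> B2 x) \/ (forall x, B2 x -> B1 x)).

Definition spherically_complete (A : G -> Prop) (v : G -> Gam) : Prop :=
  forall N, is_nest A v N -> exists x, A x /\ (forall B, N B -> B x).

Definition sumsub (n : nat) (A : 'I_n -> G -> Prop) : G -> Prop :=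
  fun x => exists a : 'I_n -> G, (forall i, A i (a i)) /\ x = \sum_(i < n) a i.

Definition pseudo_direct (v : G -> Gam) (oo : Gam) (n : nat)
    (A : 'I_n -> G -> Prop) : Prop :=
  forall a', sumsub A a' -> a' <> 0 ->
    exists a : 'I_n -> G,
      [/\ (forall i, A i (a i)),
          v (\sum_(i < n) a i) = \big[Order.min/oo]_(i < n) v (a i) &
          (v a' < v (a' - \sum_(i < n) a i))%O].

Definition optimal_approximation (B : G -> Prop) (v : G -> Gam) : Prop :=
  forall z : G, exists y0, B y0 /\ (forall y, B y -> (v (z - y) <= v (z - y0))%O).

End Balls.

(* Main.v *)
Require Import Defs.
From mathcomp Require Import all_boot all_order all_algebra.
From mathcomp Require Import boolp classical_sets.
Set Implicit Arguments. Unset Strict Implicit. Unset Printing Implicit Defensive.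
Import Order.TTheory GRing.Theory.
Local Open Scope ring_scope.
Local Open Scope order_scope.

Lemma le_oo (G : zmodType) d (Gam : orderType d) (oo : Gam) (v : G -> Gam) :
  is_valuation oo v -> forall g, g <= oo.
Proof. by case. Qed.

Lemma v0 (G : zmodType) d (Gam : orderType d) (oo : Gam) (v : G -> Gam) :
  is_valuation oo v -> v 0 = oo.
Proof. by case=> _ h _; apply/h. Qed.

Lemma vsub_ge (G : zmodType) d (Gam : orderType d) (oo : Gam) (v : G -> Gam) :
  is_valuation oo v -> forall g a b, g <= v a -> g <= v b -> g <= v (a - b).
Proof.
case=> _ _ h g a b ha hb; apply: le_trans (h a b).
by rewrite le_min ha hb.
Qed.

Lemma vN (G : zmodType) d (Gam : orderType d) (oo : Gam) (v : G -> Gam) :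
  is_valuation oo v -> forall a, v (- a) = v a.
Proof.
move=> hv a.
have H : forall b, v b <= v (- b).
  move=> b; rewrite -sub0r. apply: (vsub_ge hv) => //.
  by rewrite (v0 hv) (le_oo hv).
by apply/le_anti; rewrite H andbT; have := H (- a); rewrite opprK.
Qed.

Lemma vsubC (G : zmodType) d (Gam : orderType d) (oo : Gam) (v : G -> Gam) :
  is_valuation oo v -> forall a b, v (a - b) = v (b - a).
Proof. by move=> hv a b; rewrite -(vN hv) opprB. Qed.

Lemma vadd_ge (G : zmodType) d (Gam : orderType d) (oo : Gam) (v : G -> Gam) :
  is_valuation oo v -> forall g a b, g <= v a -> g <= v b -> g <= v (a + b).
Proof.
move=> hv g a b ha hb; rewrite -(opprK b); apply: (vsub_ge hv) => //.
by rewrite (vN hv).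
Qed.

Lemma vstrict (G : zmodType) d (Gam : orderType d) (oo : Gam) (v : G -> Gam) :
  is_valuation oo v -> forall x y, v x < v (x - y) -> v y = v x.
Proof.
move=> hv x y h.
have h1 : v x <= v y.
  have : v x <= v (x - (x - y)) by apply: (vsub_ge hv) => //; exact: ltW.
  by rewrite opprB addrC subrK.
apply/le_anti; rewrite h1 andbT.
case: (leP (v y) (v x)) => // hlt.
have : Order.min (v y) (v (x - y)) <= v (y + (x - y)).
  by apply: (vadd_ge hv); rewrite ge_min lexx ?orbT.
by rewrite [y + _]addrC subrK leNgt lt_min hlt h.
Qed.

Lemma subsub (G : zmodType) (a b c : G) : (a - c) - (b - c) = a - b.
Proof. by rewrite opprB addrA subrK. Qed.

Definition upc d (Gam : orderType d) (U : Gam -> Prop) :=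
  forall g h, U g -> g <= h -> U h.

Lemma comb (G : zmodType) d (Gam : orderType d) (oo : Gam) (v : G -> Gam) :
  is_valuation oo v -> forall U, upc U ->
  forall a b, U (v a) -> U (v b) -> U (v (a - b)).
Proof.
move=> hv U hU a b ha hb; case: (leP (v a) (v b)) => h.
  by apply: hU ha _; apply: (vsub_ge hv).
by apply: hU hb _; apply: (vsub_ge hv) => //; exact: ltW.
Qed.

Lemma combD (G : zmodType) d (Gam : orderType d) (oo : Gam) (v : G -> Gam) :
  is_valuation oo v -> forall U, upc U ->
  forall a b, U (v a) -> U (v b) -> U (v (a + b)).
Proof.
move=> hv U hU a b ha hb; rewrite -(opprK b); apply: (comb hv) => //.
by rewrite (vN hv).
Qed.

Lemma comb_sum (G : zmodType) d (Gam : orderType d) (oo : Gam) (v : G -> Gam) :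
  is_valuation oo v -> forall U, upc U -> U oo ->
  forall n (w : 'I_n -> G), (forall i, U (v (w i))) -> U (v (\sum_(i < n) w i)).
Proof.
move=> hv U hU Uoo n w hw.
apply: (big_ind (fun x => U (v x))) => //; first by rewrite (v0 hv).
by move=> x y; apply: (combD hv).
Qed.

Lemma bigmin_le_seq d (Gam : orderType d) (oo : Gam) (I : eqType) (F : I -> Gam)
  (r : seq I) j : j \in r -> \big[Order.min/oo]_(i <- r) F i <= F j.
Proof.
elim: r => // x r IH; rewrite inE big_cons => /orP[/eqP->|jr].
  by rewrite ge_min lexx.
by rewrite ge_min IH // orbT.
Qed.

Lemma bigmin_le d (Gam : orderType d) (oo : Gam) n (F : 'I_n -> Gam) j :
  \big[Order.min/oo]_(i < n) F i <= F j.
Proof. by apply: bigmin_le_seq; rewrite mem_index_enum. Qed.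

Lemma ball_of_is_ball (G : zmodType) d (Gam : orderType d) (oo : Gam) (v : G -> Gam) :
  is_valuation oo v -> forall (X : G -> Prop) c (U : Gam -> Prop),
  X c -> U oo -> upc U -> is_ball X v (fun x => X x /\ U (v (x - c))).
Proof.
move=> hv X c U Xc Uoo hU.
exists (fun p => p.1 = c /\ U p.2); split.
- by exists (c, oo).
- by move=> p [-> _].
- exists c => p [-> Up]; split => //; rewrite subrr (v0 hv); exact: (le_oo hv).
- move=> x; split.
    by move=> [Xx Ux]; exists (c, v (x - c)).
  by move=> [p [[-> Up] [Xx le]]]; split => //; apply: hU Up le.
Qed.

Lemma ball_of_sub (G : zmodType) d (Gam : orderType d) (oo : Gam) (v : G -> Gam) :
  is_valuation oo v -> forall (X : G -> Prop) (U U' : Gam -> Prop) c c',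
  upc U -> (forall g, U' g -> U g) -> U (v (c' - c)) ->
  forall x, X x /\ U' (v (x - c')) -> X x /\ U (v (x - c)).
Proof.
move=> hv X U U' c c' hU hUU' hc x [Xx Ux]; split => //.
rewrite -(subsub x c c'); apply: (comb hv) => //.
  by apply: hUU'.
by rewrite (vsubC hv).
Qed.

Lemma ball_char (G : zmodType) d (Gam : orderType d) (oo : Gam) (v : G -> Gam) :
  is_valuation oo v -> forall (X : G -> Prop) B, is_ball X v B ->
  exists U z, [/\ upc U, B z & forall w, B w <-> X w /\ U (v (w - z))].
Proof.
move=> hv X B [S [[p0 Sp0] SX [z Hz] HB]].
exists (fun g => exists p, S p /\ p.2 <= g), z; split.
- by move=> g h [p [Sp le]] gh; exists p; split => //; apply: le_trans gh.
- by apply/HB; exists p0; split => //; apply: Hz.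
move=> w; split.
  move=> /HB [p [Sp [Xw le]]]; split => //; exists p; split => //.
  have [_ lez] := Hz p Sp.
  by rewrite -(subsub w z p.1); apply: (vsub_ge hv).
move=> [Xw [p [Sp le]]]; apply/HB; exists p; split => //; split => //.
have [_ lez] := Hz p Sp.
have -> : w - p.1 = (w - z) + (z - p.1) by rewrite addrA subrK.
by apply: (vadd_ge hv).
Qed.

Definition RB (G : zmodType) d (Gam : orderType d) (v : G -> Gam)
  (X : G -> Prop) (B : G -> Prop) (g : Gam) :=
  forall x y, X x -> B y -> g <= v (x - y) -> B x.

Lemma RB_up (G : zmodType) d (Gam : orderType d) (v : G -> Gam) X B :
  upc (@RB G d Gam v X B).
Proof. by move=> g h Hg gh x y Xx By le; apply: (Hg x y) => //; apply: le_trans le. Qed.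

Lemma RB_oo (G : zmodType) d (Gam : orderType d) (oo : Gam) (v : G -> Gam) :
  is_valuation oo v -> forall X B, RB v X B oo.
Proof.
move=> hv X B x y Xx By le.
have : v (x - y) = oo by apply/le_anti; rewrite le (le_oo hv).
by case: hv => _ h _ /h /subr0_eq ->.
Qed.

Lemma RB_of_mem (G : zmodType) d (Gam : orderType d) (oo : Gam) (v : G -> Gam) :
  is_valuation oo v -> forall X B, is_ball X v B ->
  forall x y, B x -> B y -> RB v X B (v (x - y)).
Proof.
move=> hv X B hB x y Bx By.
have [U [z [hU Bz HB]]] := ball_char hv hB.
have [_ Ux] := (HB x).1 Bx; have [_ Uy] := (HB y).1 By.
have Uxy : U (v (x - y)) by rewrite -(subsub x y z); apply: (comb hv).
move=> x' y' Xx' By' le.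
have [_ Uy'] := (HB y').1 By'.
apply/HB; split => //.
rewrite -(subsub x' z y'); apply: (comb hv) => //.
  by apply: hU le.
by rewrite (vsubC hv).
Qed.

Lemma RB_sub (G : zmodType) d (Gam : orderType d) (oo : Gam) (v : G -> Gam) :
  is_valuation oo v -> forall X B B', is_ball X v B' ->
  forall y, B y -> (forall x, B x -> B' x) -> forall g, RB v X B g -> RB v X B' g.
Proof.
move=> hv X B B' hB' y By sub g Hg x' y' Xx' By' le.
case: (leP g (v (y' - y))) => h.
  apply: sub; apply: (Hg x' y) => //.
  rewrite -(subsub x' y y'); apply: (vsub_ge hv) => //.
  by rewrite (vsubC hv).
apply: (RB_of_mem hv hB' By' (sub _ By)) Xx' By' _.
by apply: le_trans le; apply: ltW.
Qed.

Lemma zorn_pairwise (T : Type) (ok1 : T -> Prop) (ok2 : T -> T -> Prop) :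
  exists Q : T -> Prop,
    [/\ (forall x, Q x -> ok1 x), (forall x y, Q x -> Q y -> ok2 x y) &
        (forall t, ok1 t -> ok2 t t -> (forall x, Q x -> ok2 x t /\ ok2 t x) -> Q t)].
Proof.
pose Pc : set (set T) := fun Q => (forall x, Q x -> ok1 x) /\ (forall x y, Q x -> Q y -> ok2 x y).
have [|Q [[HQ1 HQ2] Hmax]] := @Zorn_bigcup T Pc.
  move=> F FP Ftot; rewrite /Pc; split.
    by move=> x; rewrite /bigcup /= => -[X FX Xx]; exact: (FP X FX).1.
  move=> x y; rewrite /bigcup /= => -[X FX Xx] [Y FY Yy].
  have [XY|YX] := Ftot X Y FX FY.
    by apply: (FP Y FY).2 => //; apply: XY.
  by apply: (FP X FX).2 => //; apply: YX.
exists Q; split => // t t1 t2 tQ.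
apply: contrapT => nQt.
apply: (Hmax (fun x => Q x \/ x = t)).
  split; first by move=> x Qx; left.
  by move=> H; apply: nQt; apply: H; right.
split.
  by move=> x [/HQ1|->].
move=> x y [Qx|->] [Qy|->]; [exact: HQ2|exact: (tQ _ Qx).1|exact: (tQ _ Qy).2|exact: t2].
Qed.

Lemma sg0 (G : zmodType) (A : G -> Prop) : is_subgroup A -> A 0.
Proof. by case. Qed.
Lemma sgB (G : zmodType) (A : G -> Prop) : is_subgroup A -> forall x y, A x -> A y -> A (x - y).
Proof. by case. Qed.
Lemma sgD (G : zmodType) (A : G -> Prop) : is_subgroup A -> forall x y, A x -> A y -> A (x + y).
Proof.
move=> hA x y Ax Ay; have -> : x + y = x - (0 - y) by rewrite sub0r opprK.
by apply: (sgB hA) => //; apply: (sgB hA) => //; apply: sg0.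
Qed.

Lemma sumsubB (G : zmodType) n (A : 'I_n -> G -> Prop) :
  (forall i, is_subgroup (A i)) -> forall x y, sumsub A x -> sumsub A y -> sumsub A (x - y).
Proof.
move=> hA x y [a [Pa ->]] [b [Pb ->]]; exists (fun i => a i - b i); split.
  by move=> i; apply: sgB.
by rewrite sumrB.
Qed.

Lemma lift (G : zmodType) d (Gam : orderType d) (oo : Gam) (v : G -> Gam) :
  is_valuation oo v ->
  forall (n : nat) (A : 'I_n -> G -> Prop),
    (forall i, is_subgroup (A i)) ->
    (forall i, spherically_complete (A i) v) ->
    pseudo_direct v oo A ->
  forall s, sumsub A s -> exists c : 'I_n -> G,
    [/\ forall i, A i (c i), \sum_(i < n) c i = s & forall i, v s <= v (c i)].
Proof.
move=> hv n A hA hsc hpd s Ss.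
pose r := fun a : 'I_n -> G => v (s - \sum_(i < n) a i).
have [Q [Q1 Q2 Qmax]] := zorn_pairwise
  (fun a => (forall i, A i (a i)) /\ forall i, v s <= v (a i))
  (fun a b => r a <= r b -> forall i, r a <= v (a i - b i)).
have r0 : r (fun _ => 0) = v s by rewrite /r big1 ?subr0.
have upl : forall g : Gam, upc (fun h => g <= h) by move=> g h1 h2 H1 H2; apply: le_trans H1 H2.
have Q0 : Q (fun _ => 0).
  apply: Qmax.
  - by split => i; [apply: sg0 | rewrite (v0 hv) (le_oo hv)].
  - by move=> _ i; rewrite subrr (v0 hv) (le_oo hv).
  - move=> x Qx; have [Px Vx] := Q1 x Qx; split.
      by move=> h i; rewrite subr0; apply: le_trans h _; rewrite r0.
    by move=> h i; rewrite sub0r (vN hv); apply: le_trans (Vx i); rewrite -r0.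
have [c Hc] : exists c : 'I_n -> G,
    forall i, A i (c i) /\ forall a, Q a -> r a <= v (c i - a i).
  suff H : forall i, exists x, A i x /\ forall a, Q a -> r a <= v (x - a i).
    by have [f Hf] := choice H; exists f.
  move=> i.
  pose N := fun W => exists a, Q a /\
     W = (fun x => A i x /\ (fun g => r a <= g) (v (x - a i))).
  have nest : is_nest (A i) v N.
    split.
      move=> W [a [Qa ->]]; apply: (ball_of_is_ball hv (U := fun g => r a <= g)) => //.
        by have [Pa _] := Q1 a Qa.
      exact: (le_oo hv).
    move=> W1 W2 [a [Qa ->]] [b [Qb ->]].
    case/orP: (le_total (r a) (r b)) => hab.
      right; apply: (ball_of_sub hv (U := fun g => r a <= g) (U' := fun g => r b <= g)); [by move=> g1 g2 H1 H2; apply: le_trans H1 H2 | by move=> g; apply: le_trans hab | ].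
      by rewrite (vsubC hv); apply: Q2.
    left; apply: (ball_of_sub hv (U := fun g => r b <= g) (U' := fun g => r a <= g)); [by move=> g1 g2 H1 H2; apply: le_trans H1 H2 | by move=> g; apply: le_trans hab | ].
    by rewrite (vsubC hv); apply: Q2.
  have [x [Ax Hx]] := hsc i N nest.
  exists x; split => // a Qa.
  by have [] := Hx _ (ex_intro _ a (conj Qa erefl)).
have rc : forall a, Q a -> r a <= r c.
  move=> a Qa; rewrite {2}/r -(subsub s (\sum_(i < n) c i) (\sum_(i < n) a i)) -sumrB.
  apply: (vsub_ge hv) => //; apply: (comb_sum hv (U := fun g => r a <= g)).
  - by move=> g1 g2 H1 H2; apply: le_trans H1 H2.
  - exact: (le_oo hv).
  - by move=> i; have [_] := Hc i; apply.
have vc : forall i, v s <= v (c i).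
  by move=> i; have [_ /(_ _ Q0)] := Hc i; rewrite subr0 r0.
case: (eqVneq (\sum_(i < n) c i) s) => [e|ne].
  by exists c; split => // i; have [] := Hc i.
exfalso.
pose t := s - \sum_(i < n) c i.
have St : sumsub A t.
  apply: (sumsubB hA) => //; exists c; split => // i; by have [] := Hc i.
have t0 : t <> 0 by move/eqP; rewrite subr_eq0 eq_sym (negbTE ne).
have [b [Pb Hvb Hlt]] := hpd t St t0.
have vphib : v (\sum_(i < n) b i) = v t by apply: (vstrict hv).
have vb : forall i, v t <= v (b i) by move=> i; rewrite -vphib Hvb; apply: bigmin_le.
have rct : r c = v t by [].
pose c' := fun i => c i + b i.
have rc' : r c' = v (t - \sum_(i < n) b i) by rewrite /r big_split /= opprD addrA.
have lt : r c < r c' by rewrite rc' rct.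
have vst : v s <= v t by rewrite -rct -r0; apply: rc.
have Qc' : Q c'.
  apply: Qmax.
  - split => i; first by apply: (sgD (hA i)); [have [] := Hc i | apply: Pb].
    by apply: (vadd_ge hv) => //; apply: le_trans vst (vb i).
  - by move=> _ i; rewrite subrr (v0 hv) (le_oo hv).
  - move=> x Qx; split.
      move=> _ i; rewrite /c' opprD addrA; apply: (vsub_ge hv).
        by rewrite (vsubC hv); have [_] := Hc i; apply.
      by apply: le_trans (vb i); rewrite -rct; apply: rc.
    move=> h; have := le_lt_trans (le_trans h (rc x Qx)) lt.
    by rewrite ltxx.
by have := rc _ Qc'; rewrite leNgt lt.
Qed.

Lemma sc_sum (G : zmodType) d (Gam : orderType d) (oo : Gam) (v : G -> Gam) :
  is_valuation oo v ->
  forall (n : nat) (A : 'I_n -> G -> Prop),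
    (forall i, is_subgroup (A i)) ->
    (forall i, spherically_complete (A i) v) ->
    pseudo_direct v oo A ->
    spherically_complete (sumsub A) v.
Proof.
move=> hv n A hA hsc hpd N [Nball Nnest].
pose X := sumsub A.
have [Q [Q1 Q2 Qmax]] := zorn_pairwise
  (fun p : ('I_n -> G) * (G -> Prop) =>
     (forall i, A i (p.1 i)) /\ N p.2 /\ p.2 (\sum_(i < n) p.1 i))
  (fun p q => (forall x, q.2 x -> p.2 x) -> forall i, RB v X p.2 (v (p.1 i - q.1 i))).
have [c Hc] : exists c : 'I_n -> G,
    forall i, A i (c i) /\ forall p, Q p -> RB v X p.2 (v (c i - p.1 i)).
  suff H : forall i, exists x, A i x /\ forall p, Q p -> RB v X p.2 (v (x - p.1 i)).
    by have [f Hf] := choice H; exists f.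
  move=> i.
  pose Ni := fun W => exists p, Q p /\
     W = (fun x => A i x /\ RB v X p.2 (v (x - p.1 i))).
  have nest : is_nest (A i) v Ni.
    split.
      move=> W [p [Qp ->]]; apply: (ball_of_is_ball hv (U := RB v X p.2)).
      - by have [Pp _] := Q1 p Qp.
      - exact: (RB_oo hv).
      - exact: RB_up.
    move=> W1 W2 [p [Qp ->]] [q [Qq ->]].
    have [Pp [Np Bp]] := Q1 p Qp; have [Pq [Nq Bq]] := Q1 q Qq.
    case: (Nnest _ _ Np Nq) => pq.
      left; apply: (ball_of_sub hv (U := RB v X q.2) (U' := RB v X p.2)).
      - exact: RB_up.
      - exact: (RB_sub hv (Nball _ Nq) Bp pq).
      - by rewrite (vsubC hv); apply: Q2.
    right; apply: (ball_of_sub hv (U := RB v X p.2) (U' := RB v X q.2)).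
    - exact: RB_up.
    - exact: (RB_sub hv (Nball _ Np) Bq pq).
    - by rewrite (vsubC hv); apply: Q2.
  have [x [Ax Hx]] := hsc i Ni nest.
  exists x; split => // p Qp.
  by have [] := Hx _ (ex_intro _ p (conj Qp erefl)).
have Xc : X (\sum_(i < n) c i) by exists c; split => // i; have [] := Hc i.
have inQ : forall p, Q p -> p.2 (\sum_(i < n) c i).
  move=> p Qp; have [Pp [Np Bp]] := Q1 p Qp.
  have H : RB v X p.2 (v (\sum_(i < n) c i - \sum_(i < n) p.1 i)).
    rewrite -sumrB; apply: (comb_sum hv (U := RB v X p.2)).
    - exact: RB_up.
    - exact: (RB_oo hv).
    - by move=> i; have [_] := Hc i; apply.
  exact: (H _ _ Xc Bp (lexx _)).
exists (\sum_(i < n) c i); split => // B0 NB0.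
apply: contrapT => nB0.
have notsub : forall p, Q p -> ~ (forall x, p.2 x -> B0 x).
  by move=> p Qp h; apply: nB0; apply: h; apply: inQ.
have sup : forall p, Q p -> forall x, B0 x -> p.2 x.
  move=> p Qp; have [_ [Np _]] := Q1 p Qp.
  by case: (Nnest _ _ NB0 Np) => // h; exfalso; apply: (notsub p Qp).
have [U [y [hU By HB0]]] := ball_char hv (Nball _ NB0).
have Xy : X y by have [] := (HB0 y).1 By.
have [dd [Pd ed vd]] := lift hv hA hsc hpd (sumsubB hA Xy Xc).
pose c' := fun i => c i + dd i.
have ec' : \sum_(i < n) c' i = y by rewrite big_split /= ed addrC subrK.
have Qc' : Q (c', B0).
  apply: Qmax.
  - split; first by move=> i; apply: (sgD (hA i)); [have [] := Hc i | apply: Pd].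
    by split => //=; rewrite ec'.
  - by move=> _ i; rewrite subrr (v0 hv); apply: (RB_oo hv).
  - move=> p Qp; split.
      move=> _ i /=; rewrite /c' opprD addrA; apply: (comb hv (U := RB v X p.2)).
      + exact: RB_up.
      + by rewrite (vsubC hv); have [_] := Hc i; apply.
      + apply: (RB_up (RB_of_mem hv (Nball _ (Q1 p Qp).2.1) (sup p Qp y By) (inQ p Qp))).
        exact: vd.
    by move=> h; exfalso; apply: (notsub p Qp).
by apply: (notsub _ Qc').
Qed.

Lemma sc_opt (G : zmodType) d (Gam : orderType d) (oo : Gam) (v : G -> Gam) :
  is_valuation oo v -> forall X : G -> Prop,
  spherically_complete X v -> optimal_approximation X v.
Proof.
move=> hv X hX z.
pose N := fun W => exists y, X y /\
   W = (fun x => X x /\ (fun g => v (z - y) <= g) (v (x - y))).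
have upl : forall g : Gam, upc (fun h => g <= h).
  by move=> g h1 h2 H1 H2; apply: le_trans H1 H2.
have nest : is_nest X v N.
  split.
    move=> W [y [Xy ->]]; apply: (ball_of_is_ball hv (U := fun g => v (z - y) <= g)) => //.
      exact: (le_oo hv).
  move=> W1 W2 [a [Xa ->]] [b [Xb ->]].
  case/orP: (le_total (v (z - a)) (v (z - b))) => hab.
    right; apply: (ball_of_sub hv (U := fun g => v (z - a) <= g) (U' := fun g => v (z - b) <= g)); [exact: upl | by move=> g; apply: le_trans hab | ].
    by rewrite -(subsub b a z); apply: (vsub_ge hv); rewrite ?(vsubC hv b z) ?(vsubC hv a z).
  left; apply: (ball_of_sub hv (U := fun g => v (z - b) <= g) (U' := fun g => v (z - a) <= g)); [exact: upl | by move=> g; apply: le_trans hab | ].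
  by rewrite -(subsub a b z); apply: (vsub_ge hv); rewrite ?(vsubC hv b z) ?(vsubC hv a z).
have [x [Xx Hx]] := hX N nest.
exists x; split => // y Xy.
have [_ h] := Hx _ (ex_intro _ y (conj Xy erefl)).
by rewrite -(subsub z x y); apply: (vsub_ge hv).
Qed.

Theorem theorem65 (G : zmodType) (d : Order.disp_t) (Gam : orderType d)
    (oo : Gam) (v : G -> Gam) :
  is_valuation oo v ->
  forall (n : nat) (A : 'I_n -> G -> Prop),
    (forall i, is_subgroup (A i)) ->
    (forall i, spherically_complete (A i) v) ->
    pseudo_direct v oo A ->
    spherically_complete (sumsub A) v /\ optimal_approximation (sumsub A) v.
Proof.
move=> hv n A hA hsc hpd.
have h := sc_sum hv hA hsc hpd.
by split => //; apply: (sc_opt hv).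
Qed.
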